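(* In the setting described in the context, the following three conditions are equivalent: (1) there exists a capacity $\mu:2^{\mathcal C}\to L$ representing the training data, i.e. $S_\mu(x^{(k)})=\alpha^{(k)}$ for all $k\in\{1,\dots,N\}$; (2) the max–min system $(S)$ is consistent and $e(\mathcal C)=1$; (3) the min–max system $(\Sigma)$ is consistent and $f(\emptyset)=0$.
   Context: Let $\mathcal C=\{1,\dots,n\}$ and let $L$ be either a finite totally ordered set $0=\xi_1<\dots<\xi_l=1$ or $L=[0,1]$. A capacity is a map $\mu:2^{\mathcal C}\to L$ with $\mu(\emptyset)=0$, $\mu(\mathcal C)=1$, and $A\subseteq B\Rightarrow\mu(A)\le\mu(B)$. The Sugeno integral of $x\in L^n$ is $S_\mu(x)=\max_{A\subseteq\mathcal C}\min(\min_{i\in A}x_i,\mu(A))$ with $\min_{i\in\emptyset}x_i=1$. Training data: $N$ pairs $(x^{(k)},\alpha^{(k)})$ with $x^{(k)}\in L^n$, $\alpha^{(k)}\in L$. For nonempty $A$, $m_{k,A}=\min_{i\in A}x^{(k)}_i$; for $A\subsetneq\mathcal C$, $\gamma_{k,A}=\max_{i\in\mathcal C\setminus A}x^{(k)}_i$. The system $(S)$ has unknowns $\xi_A\in L$, $A\subseteq\mathcal C$ nonempty, and equations $\max_{A\neq\emptyset}\min(m_{k,A},\xi_A)=\alpha^{(k)}$ for $k=1,\dots,N$. The system $(\Sigma)$ has unknowns $\xi_A\in L$, $A\subsetneq\mathcal C$, and equations $\min_{A\subsetneq\mathcal C}\max(\gamma_{k,A},\xi_A)=\alpha^{(k)}$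 for $k=1,\dots,N$. A system is consistent if it has a solution in $L$. Gödel implication: $a\to_G b=1$ if $a\le b$, else $b$; epsilon product: $a\,\epsilon\,b=b$ if $a<b$, else $0$. Set $e(A)=\min_{k}(m_{k,A}\to_G\alpha^{(k)})$ for nonempty $A$ and $f(B)=\max_k(\gamma_{k,B}\,\epsilon\,\alpha^{(k)})$ for $B\subsetneq\mathcal C$. *)

(* Defs.v *)
From mathcomp Require Import all_boot all_order all_algebra.
Set Implicit Arguments. Unset Strict Implicit. Unset Printing Implicit Defensive.
Import Order.TTheory GRing.Theory Num.Theory.
Local Open Scope ring_scope.

Section Sugeno.
Variable R : realDomainType.

Definition is_scale (L : R -> Prop) : Prop :=
  [/\ L 0, L 1, (forall y, L y -> 0 <= y <= 1) &
      ((exists s : seq R, forall y, L y <-> y \in s) \/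
       (forall y, L y <-> 0 <= y <= 1))].

Variable n : nat.

Definition capacity (L : R -> Prop) (mu : {set 'I_n} -> R) : Prop :=
  [/\ forall A, L (mu A), mu set0 = 0, mu setT = 1 &
      forall A B : {set 'I_n}, A \subset B -> mu A <= mu B].

(* Sugeno integral, with min over the empty set equal to 1 *)
Definition sugeno (mu : {set 'I_n} -> R) (x : 'I_n -> R) : R :=
  \big[Num.max/0]_(A : {set 'I_n}) Num.min (\big[Num.min/1]_(i in A) x i) (mu A).

(* m_{k,A} = min_{i in A} x_i  (used for nonempty A) *)
Definition mA (x : 'I_n -> R) (A : {set 'I_n}) : R := \big[Num.min/1]_(i in A) x i.
(* gamma_{k,A} = max_{i in C \ A} x_i  (used for A proper) *)
Definition gammaA (x : 'I_n -> R) (A : {set 'I_n}) : R := \big[Num.max/0]_(i in ~: A) x i.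

Definition godel (a b : R) : R := if a <= b then 1 else b.
Definition eps_prod (a b : R) : R := if a < b then b else 0.

Variable N : nat.
Variables (x : 'I_N -> 'I_n -> R) (alpha : 'I_N -> R).

Definition S_consistent (L : R -> Prop) : Prop :=
  exists xi : {set 'I_n} -> R,
    (forall A, A != set0 -> L (xi A)) /\
    forall k, \big[Num.max/0]_(A : {set 'I_n} | A != set0) Num.min (mA (x k) A) (xi A)
              = alpha k.

Definition Sigma_consistent (L : R -> Prop) : Prop :=
  exists xi : {set 'I_n} -> R,
    (forall A, A != setT -> L (xi A)) /\
    forall k, \big[Num.min/1]_(A : {set 'I_n} | A != setT) Num.max (gammaA (x k) A) (xi A)
              = alpha k.

Definition e_fun (A : {set 'I_n}) : R := \big[Num.min/1]_(k < N) godel (mA (x k) A) (alpha k).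
Definition f_fun (B : {set 'I_n}) : R := \big[Num.max/0]_(k < N) eps_prod (gammaA (x k) B) (alpha k).

End Sugeno.

(* Main.v *)
Require Import Defs.
From mathcomp Require Import all_boot all_order all_algebra.
Import Order.TTheory GRing.Theory Num.Theory.
Local Open Scope ring_scope.

Lemma mA_le1 (R : realDomainType) n (x : 'I_n -> R) A : mA x A <= 1.
Proof. exact: bigmin_le_id. Qed.

Lemma mA_anti (R : realDomainType) n (x : 'I_n -> R) (A B : {set 'I_n}) :
  A \subset B -> mA x B <= mA x A.
Proof.
move=> sAB; apply: le_bigmin; first exact: mA_le1.
by move=> i iA; apply: bigmin_le_cond; apply: (subsetP sAB).
Qed.

Lemma gamma_ge0 (R : realDomainType) n (x : 'I_n -> R) A : 0 <= gammaA x A.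
Proof. exact: bigmax_ge_id. Qed.

Lemma gamma_anti (R : realDomainType) n (x : 'I_n -> R) (A B : {set 'I_n}) :
  A \subset B -> gammaA x B <= gammaA x A.
Proof.
move=> sAB; apply: bigmax_le; first exact: gamma_ge0.
move=> i; rewrite !inE => iB; apply: le_bigmax_cond; rewrite inE.
by apply: contra iB; apply: (subsetP sAB).
Qed.

Lemma sugeno_ne (R : realDomainType) n (mu : {set 'I_n} -> R) (x : 'I_n -> R) :
  mu set0 = 0 ->
  sugeno mu x = \big[Num.max/0]_(A : {set 'I_n} | A != set0) Num.min (mA x A) (mu A).
Proof.
move=> mu0; apply: le_anti; apply/andP; split.
  apply: bigmax_le; first exact: bigmax_ge_id.
  move=> A _; case: (eqVneq A set0) => [->|nA].
    by rewrite ge_min mu0 bigmax_ge_id orbT.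
  by apply: le_bigmax_cond.
apply: bigmax_le; first exact: bigmax_ge_id.
move=> A _; exact: le_bigmax.
Qed.

Lemma duality (R : realDomainType) n (hn : (0 < n)%N) (mu : {set 'I_n} -> R)
  (x : 'I_n -> R) :
  (forall A B : {set 'I_n}, A \subset B -> mu A <= mu B) ->
  mu set0 = 0 -> mu setT = 1 -> (forall i, 0 <= x i <= 1) ->
  sugeno mu x = \big[Num.min/1]_(A : {set 'I_n} | A != setT) Num.max (gammaA x A) (mu A).
Proof.
move=> mono mu0 mu1 hx; apply: le_anti; apply/andP; split.
  apply: le_bigmin.
    apply: bigmax_le => // A _; rewrite ge_min; apply/orP; left; exact: bigmin_le_id.
  move=> B nB; apply: bigmax_le.
    by rewrite le_max gamma_ge0.
  move=> A _; case: (boolP (A \subset B)) => sAB.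
    by rewrite ge_min; apply/orP; right; rewrite le_max (mono _ _ sAB) orbT.
  have [i iA iB] : exists2 i, i \in A & i \notin B.
    by move/subsetPn: sAB => [i iA iB]; exists i.
  rewrite ge_min; apply/orP; left; rewrite le_max; apply/orP; left.
  apply: (@le_trans _ _ (x i)); first exact: bigmin_le_cond.
  by apply: le_bigmax_cond; rewrite inE.
set s := sugeno mu x.
have s0 : 0 <= s by exact: bigmax_ge_id.
have term : forall A, Num.min (mA x A) (mu A) <= s.
  by move=> A; apply: le_bigmax.
set B := [set i | s < x i].
have hB : forall A, A != set0 -> {subset A <= B} -> mu A <= s.
  move=> A /set0Pn [j jA] sAB.
  have := term A; rewrite ge_min => /orP [|//].
  rewrite leNgt => /negP; case; apply/bigmin_gtP; split.
    have := sAB j jA; rewrite inE => /lt_le_trans; apply.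
    by case/andP: (hx j).
  by move=> i iA; have := sAB i iA; rewrite inE.
have nB : B != setT.
  apply/negP => /eqP eB.
  have i0 : 'I_n := Ordinal hn.
  have := hB setT; rewrite mu1 => h.
  have : 1 <= s.
    apply: h; first by apply/set0Pn; exists i0.
    by move=> i _; rewrite eB.
  have := eB; move/setP/(_ i0); rewrite !inE => hi.
  move=> h1; have := lt_le_trans hi (proj2 (andP (hx i0))).
  by rewrite ltNge h1.
apply: (@bigmin_inf _ _ _ _ B) => //.
rewrite ge_max; apply/andP; split.
  apply: bigmax_le => // i; rewrite !inE; by rewrite -leNgt.
case: (eqVneq B set0) => [->|neB]; first by rewrite mu0.
by apply: hB.
Qed.

Lemma L_min (R : realDomainType) (L : R -> Prop) a b : L a -> L b -> L (Num.min a b).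
Proof. by rewrite minEle; case: ifP. Qed.
Lemma L_max (R : realDomainType) (L : R -> Prop) a b : L a -> L b -> L (Num.max a b).
Proof. by rewrite maxEle; case: ifP. Qed.

Lemma godel_anti (R : realDomainType) (a a' b : R) : b <= 1 -> a' <= a ->
  godel a b <= godel a' b.
Proof.
rewrite /godel => b1 aa; case: ifP => h; first by rewrite (le_trans aa h).
by case: ifP.
Qed.

Lemma eps_anti (R : realDomainType) (a a' b : R) : 0 <= b -> a' <= a ->
  eps_prod a b <= eps_prod a' b.
Proof.
rewrite /eps_prod => b0 aa; case: ifP => h; first by rewrite (le_lt_trans aa h).
by case: ifP.
Qed.

Lemma setT_ne0 n (hn : (0 < n)%N) : (setT : {set 'I_n}) != set0.
Proof. by apply/set0Pn; exists (Ordinal hn); rewrite inE. Qed.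

Lemma imp12 (R : realDomainType) (L : R -> Prop) (n N : nat)
    (x : 'I_N -> 'I_n -> R) (alpha : 'I_N -> R) :
  is_scale L -> (0 < n)%N ->
  (forall k i, L (x k i)) -> (forall k, L (alpha k)) ->
  (exists mu, capacity L mu /\ forall k, sugeno mu (x k) = alpha k) ->
  (S_consistent x alpha L /\ e_fun x alpha setT = 1).
Proof.
move=> [L0 L1 Lb _] hn Lx La [mu [[Lmu mu0 mu1 mono] hs]]; split.
  exists mu; split=> // k; by rewrite -(hs k) sugeno_ne.
apply: bigmin_eq_id => k _.
have -> : godel (mA (x k) setT) (alpha k) = 1 => //.
rewrite /godel -(hs k).
have -> : mA (x k) setT <= sugeno mu (x k) => //.
apply: (@le_trans _ _ (Num.min (mA (x k) setT) (mu setT))).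
  by rewrite mu1 le_min lexx mA_le1.
exact: le_bigmax.
Qed.

Lemma imp21 (R : realDomainType) (L : R -> Prop) (n N : nat)
    (x : 'I_N -> 'I_n -> R) (alpha : 'I_N -> R) :
  is_scale L -> (0 < n)%N ->
  (forall k i, L (x k i)) -> (forall k, L (alpha k)) ->
  (S_consistent x alpha L /\ e_fun x alpha setT = 1) ->
  (exists mu, capacity L mu /\ forall k, sugeno mu (x k) = alpha k).
Proof.
move=> [L0 L1 Lb _] hn Lx La [[xi [Lxi hxi]] e1].
have a01 : forall k, 0 <= alpha k <= 1 by move=> k; apply: Lb.
have e0 : forall A, 0 <= e_fun x alpha A.
  move=> A; apply: le_bigmin => // k _; rewrite /godel; case: ifP => //.
  by case/andP: (a01 k).
have emono : forall A B : {set 'I_n}, A \subset B -> e_fun x alpha A <= e_fun x alpha B.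
  move=> A B sAB; apply: le_bigmin; first exact: bigmin_le_id.
  move=> k _; apply: (bigmin_inf k) => //.
  apply: godel_anti; first by case/andP: (a01 k).
  exact: mA_anti.
have eL : forall A, L (e_fun x alpha A).
  move=> A; rewrite /e_fun; elim/big_ind: _ => //; first exact: L_min.
  by move=> k _; rewrite /godel; case: ifP.
have xie : forall A, A != set0 -> xi A <= e_fun x alpha A.
  move=> A nA; apply: le_bigmin; first by case/andP: (Lb _ (Lxi A nA)).
  move=> k _; rewrite /godel; case: ifP => [_|/negbT]; first by case/andP: (Lb _ (Lxi A nA)).
  rewrite -ltNge => hlt.
  have : Num.min (mA (x k) A) (xi A) <= alpha k.
    by rewrite -(hxi k); apply: (bigmax_sup A) => //.
  by rewrite ge_min leNgt hlt.
pose mu (A : {set 'I_n}) := if A == set0 then 0 else e_fun x alpha A.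
exists mu; split; first split.
- by move=> A; rewrite /mu; case: ifP.
- by rewrite /mu eqxx.
- by rewrite /mu (negbTE (setT_ne0 _ hn)).
- move=> A B sAB; rewrite /mu; case: ifP => // nA; first by case: ifP.
  case: ifP => [/eqP eB|]; last by move=> _; exact: emono.
  by move: sAB nA; rewrite eB subset0 => ->.
move=> k; rewrite sugeno_ne; last by rewrite /mu eqxx.
rewrite (eq_bigr (fun A => Num.min (mA (x k) A) (e_fun x alpha A))); last first.
  by move=> A nA; rewrite /mu (negbTE nA).
apply: le_anti; apply/andP; split.
  apply: bigmax_le; first by case/andP: (a01 k).
  move=> A _; rewrite ge_min; case: (boolP (mA (x k) A <= alpha k)) => //= hlt.
  apply: (bigmin_inf k) => //.
  by rewrite /godel (negbTE hlt).
rewrite -{1}(hxi k); apply: bigmax_le; first exact: bigmax_ge_id.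
move=> A nA; apply: (bigmax_sup A) => //.
by rewrite le_min ge_min lexx ge_min (xie _ nA) orbT.
Qed.

Lemma imp13 (R : realDomainType) (L : R -> Prop) (n N : nat)
    (x : 'I_N -> 'I_n -> R) (alpha : 'I_N -> R) :
  is_scale L -> (0 < n)%N ->
  (forall k i, L (x k i)) -> (forall k, L (alpha k)) ->
  (exists mu, capacity L mu /\ forall k, sugeno mu (x k) = alpha k) ->
  (Sigma_consistent x alpha L /\ f_fun x alpha set0 = 0).
Proof.
move=> [L0 L1 Lb _] hn Lx La [mu [[Lmu mu0 mu1 mono] hs]]; split.
  exists mu; split=> // k; rewrite -(hs k) duality //.
  by move=> i; apply: Lb.
apply: bigmax_eq_id => k _.
have h : alpha k <= gammaA (x k) set0.
  rewrite -(hs k); apply: bigmax_le; first exact: gamma_ge0.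
  move=> A _; case: (eqVneq A set0) => [->|/set0Pn [i iA]].
    by rewrite ge_min mu0 gamma_ge0 orbT.
  rewrite ge_min; apply/orP; left.
  apply: (@le_trans _ _ (x k i)); first exact: bigmin_le_cond.
  by apply: le_bigmax_cond; rewrite !inE.
by rewrite /eps_prod ltNge h.
Qed.

Lemma imp31 (R : realDomainType) (L : R -> Prop) (n N : nat)
    (x : 'I_N -> 'I_n -> R) (alpha : 'I_N -> R) :
  is_scale L -> (0 < n)%N ->
  (forall k i, L (x k i)) -> (forall k, L (alpha k)) ->
  (Sigma_consistent x alpha L /\ f_fun x alpha set0 = 0) ->
  (exists mu, capacity L mu /\ forall k, sugeno mu (x k) = alpha k).
Proof.
move=> [L0 L1 Lb _] hn Lx La [[xi [Lxi hxi]] f0].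
have a01 : forall k, 0 <= alpha k <= 1 by move=> k; apply: Lb.
have f1 : forall A, f_fun x alpha A <= 1.
  move=> A; apply: bigmax_le => // k _; rewrite /eps_prod; case: ifP => //.
  by case/andP: (a01 k).
have fmono : forall A B : {set 'I_n}, A \subset B -> f_fun x alpha A <= f_fun x alpha B.
  move=> A B sAB; apply: bigmax_le; first exact: bigmax_ge_id.
  move=> k _; apply: (bigmax_sup k) => //.
  apply: eps_anti; first by case/andP: (a01 k).
  exact: gamma_anti.
have fL : forall A, L (f_fun x alpha A).
  move=> A; rewrite /f_fun; elim/big_ind: _ => //; first exact: L_max.
  by move=> k _; rewrite /eps_prod; case: ifP.
have fxi : forall A : {set 'I_n}, A != setT -> f_fun x alpha A <= xi A.
  move=> A nA; apply: bigmax_le; first by case/andP: (Lb _ (Lxi A nA)).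
  move=> k _; rewrite /eps_prod; case: ifP => [hlt|_]; last by case/andP: (Lb _ (Lxi A nA)).
  have : alpha k <= Num.max (gammaA (x k) A) (xi A).
    by rewrite -(hxi k); apply: (bigmin_inf A) => //.
  by rewrite le_max leNgt hlt.
pose mu (A : {set 'I_n}) := if A == setT then 1 else f_fun x alpha A.
have mmono : forall A B : {set 'I_n}, A \subset B -> mu A <= mu B.
  move=> A B sAB; rewrite /mu; case: ifP => [/eqP eA|nA].
    by move: sAB; rewrite eA subTset => /eqP ->; rewrite eqxx.
  case: ifP => // _; exact: fmono.
have mu0 : mu set0 = 0.
  by rewrite /mu eq_sym (negbTE (setT_ne0 _ hn)).
exists mu; split; first split => //.
- by move=> A; rewrite /mu; case: ifP.
- by rewrite /mu eqxx.
move=> k; rewrite duality //; last first.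
- by move=> i; apply: Lb.
- by rewrite /mu eqxx.
rewrite (eq_bigr (fun A => Num.max (gammaA (x k) A) (f_fun x alpha A))); last first.
  by move=> A nA; rewrite /mu (negbTE nA).
apply: le_anti; apply/andP; split; last first.
  apply: le_bigmin; first by case/andP: (a01 k).
  move=> A nA; rewrite le_max; case: (boolP (alpha k <= gammaA (x k) A)) => //= hlt.
  apply: (bigmax_sup k) => //.
  by rewrite /eps_prod ltNge hlt.
rewrite -(hxi k); apply: le_bigmin; first exact: bigmin_le_id.
move=> A nA; apply: (bigmin_inf A) => //.
by rewrite ge_max le_max lexx /= le_max (fxi _ nA) orbT.
Qed.

Theorem theorem1 (R : realDomainType) (L : R -> Prop) (n N : nat)
    (x : 'I_N -> 'I_n -> R) (alpha : 'I_N -> R) :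
  is_scale L -> (0 < n)%N ->
  (forall k i, L (x k i)) -> (forall k, L (alpha k)) ->
  [/\ (exists mu, capacity L mu /\ forall k, sugeno mu (x k) = alpha k)
        <-> (S_consistent x alpha L /\ e_fun x alpha setT = 1),
      (S_consistent x alpha L /\ e_fun x alpha setT = 1)
        <-> (Sigma_consistent x alpha L /\ f_fun x alpha set0 = 0) &
      (exists mu, capacity L mu /\ forall k, sugeno mu (x k) = alpha k)
        <-> (Sigma_consistent x alpha L /\ f_fun x alpha set0 = 0)].
Proof.
move=> hL hn Lx La.
have i12 := @imp12 R L n N x alpha hL hn Lx La; have i21 := @imp21 R L n N x alpha hL hn Lx La.
have i13 := @imp13 R L n N x alpha hL hn Lx La; have i31 := @imp31 R L n N x alpha hL hn Lx La.
split; split; auto.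
Qed.
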